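(* Let $\mathbf{p}=\langle x_1,y_1,r_1,\dots,x_n,y_n,r_n\rangle$ be a packing of a planar embedded graph $G=(V,E)$, with vertex set partitioned as $V=V^+\sqcup V^-\sqcup V^=\sqcup V^0$. Suppose there exists an equilibrium stress $\omega:E\to\mathbb{R}$ (i.e. $\sum_{j:(i,j)\in E}\omega_{ij}(\mathbf{p}_i-\mathbf{p}_j)=0$ for every vertex $i$) whose radial force sum $\omega_i=\sum_{j:(i,j)\in E}\omega_{ij}(r_i+r_j)$ is positive for $i\in V^-$, negative for $i\in V^+$, and $0$ for $i\in V^0$. Let $\mathbf{p}'=\langle x_1',y_1',r_1',\dots,x_n',y_n',r_n'\rangle$ be any vector (not required to preserve tangencies) such that for every edge $(i,j)\in E$: (1) if $\omega_{ij}<0$, then $(\mathbf{p}_i-\mathbf{p}_j)\cdot(\mathbf{p}_i'-\mathbf{p}_j')-(r_i+r_j)(r_i'+r_j')\ge 0$ (disks $i$ and $j$ remain tangent or become separated to first order); (2) if $\omega_{ij}>0$, then $(\mathbf{p}_i-\mathbf{p}_j)\cdot(\mathbf{p}_i'-\mathbf{p}_j')-(r_i+r_j)(r_i'+r_j')\le 0$ (disks $i$ and $j$ remain tangent or become overlapped to first order); and (3) $r_k'\ge 0$ for $k\in V^+$, $r_k'\le 0$ for $k\in V^-$, $r_k'=0$ for $k\in V^=$. Then $r_k'=0$ for all $k\in V^+\cup V^-$, and $(\mathbf{p}_i-\mathbf{p}_j)\cdot(\mathbf{p}_i'-\mathbf{p}_j')=(r_i+r_j)(r_i'+r_j')$ for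 every edge $(i,j)$ with $\omega_{ij}\neq 0$ (all such tangencies are preserved to first order).
   Context: A packing of $G$ assigns to each vertex $i$ a disk with center $\mathbf{p}_i=(x_i,y_i)$ and radius $r_i>0$, such that disks joined by an edge are externally tangent, $(r_i+r_j)^2=\|\mathbf{p}_i-\mathbf{p}_j\|^2$. The sets $V^+,V^-,V^=,V^0$ are the disks allowed only to increase (or stay) in radius, only to decrease (or stay), with fixed radius, and free, respectively. *)

(* Defs.v *)
From HB Require Import structures.
From mathcomp Require Import all_boot all_order all_algebra.
Set Implicit Arguments. Unset Strict Implicit. Unset Printing Implicit Defensive.
Import Order.TTheory GRing.Theory Num.Theory.
Local Open Scope ring_scope.

Definition simple_graph (n : nat) (e : rel 'I_n) : Prop :=
  (forall i j, e i j = e j i) /\ (forall i, ~~ e i i).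

(* The four constraint classes V^+, V^-, V^=, V^0 : a function assigning
   each vertex exactly one class is the same as a partition of V. *)
Inductive vkind := Vplus | Vminus | Veq | Vfree.

Definition packing (R : realFieldType) (n : nat) (e : rel 'I_n)
  (x y r : 'I_n -> R) : Prop :=
  (forall i, 0 < r i) /\
  (forall i j, e i j ->
     (r i + r j) ^+ 2 = (x i - x j) ^+ 2 + (y i - y j) ^+ 2).

(* An (edge-)stress: a symmetric weight on ordered pairs (only values on
   edges matter). *)
Definition sym_stress (R : realFieldType) (n : nat) (w : 'I_n -> 'I_n -> R) :=
  forall i j, w i j = w j i.

Definition equilibrium (R : realFieldType) (n : nat) (e : rel 'I_n)
  (x y : 'I_n -> R) (w : 'I_n -> 'I_n -> R) : Prop :=
  forall i, \sum_(j | e i j) w i j * (x i - x j) = 0 /\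
            \sum_(j | e i j) w i j * (y i - y j) = 0.

Definition radial_sum (R : realFieldType) (n : nat) (e : rel 'I_n)
  (r : 'I_n -> R) (w : 'I_n -> 'I_n -> R) (i : 'I_n) : R :=
  \sum_(j | e i j) w i j * (r i + r j).

Definition tang_var (R : realFieldType) (n : nat) (x y r x' y' r' : 'I_n -> R)
  (i j : 'I_n) : R :=
  (x i - x j) * (x' i - x' j) + (y i - y j) * (y' i - y' j)
  - (r i + r j) * (r' i + r' j).

(* Main.v *)
Require Import Defs.
From HB Require Import structures.
From mathcomp Require Import all_boot all_order all_algebra.
From mathcomp Require Import ring lra.
Import Order.TTheory GRing.Theory Num.Theory.
Local Open Scope ring_scope.

Lemma swap_sum (R : realFieldType) (n : nat) (e : rel 'I_n) (G : 'I_n -> 'I_n -> R) :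
  (forall i j, e i j = e j i) ->
  \sum_i \sum_(j | e i j) G i j = \sum_i \sum_(j | e i j) G j i.
Proof.
move=> es.
under eq_bigr do rewrite big_mkcond.
rewrite exchange_big /=.
apply: eq_bigr => i _; rewrite [RHS]big_mkcond; apply: eq_bigr => j _.
by rewrite es.
Qed.

Theorem mainTheorem4 (R : realFieldType) (n : nat) (e : rel 'I_n)
  (kind : 'I_n -> vkind) (x y r : 'I_n -> R) (w : 'I_n -> 'I_n -> R)
  (x' y' r' : 'I_n -> R) :
  simple_graph e ->
  packing e x y r ->
  sym_stress w ->
  equilibrium e x y w ->
  (forall i, kind i = Vminus -> 0 < radial_sum e r w i) ->
  (forall i, kind i = Vplus -> radial_sum e r w i < 0) ->
  (forall i, kind i = Vfree -> radial_sum e r w i = 0) ->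
  (forall i j, e i j -> w i j < 0 -> 0 <= tang_var x y r x' y' r' i j) ->
  (forall i j, e i j -> 0 < w i j -> tang_var x y r x' y' r' i j <= 0) ->
  (forall k, kind k = Vplus -> 0 <= r' k) ->
  (forall k, kind k = Vminus -> r' k <= 0) ->
  (forall k, kind k = Veq -> r' k = 0) ->
  (forall k, (kind k = Vplus \/ kind k = Vminus) -> r' k = 0) /\
  (forall i j, e i j -> w i j != 0 ->
     (x i - x j) * (x' i - x' j) + (y i - y j) * (y' i - y' j)
     = (r i + r j) * (r' i + r' j)).
Proof.
move=> [es _] _ ws eq Hm Hp Hf Tn Tp Rp Rm Re.
set T := tang_var x y r x' y' r'.
set P := fun i j => w i j * ((x i - x j) * x' i + (y i - y j) * y' i - (r i + r j) * r' i).
have wT : forall i j, w i j * T i j = P i j + P j i.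
  move=> i j; rewrite /T /P /tang_var ws; ring.
have sP : forall i, \sum_(j | e i j) P i j = - (r' i * radial_sum e r w i).
  move=> i; rewrite /P /radial_sum.
  have [ex ey] := eq i.
  have -> : \sum_(j | e i j) w i j * ((x i - x j) * x' i + (y i - y j) * y' i - (r i + r j) * r' i)
     = (\sum_(j | e i j) w i j * (x i - x j)) * x' i + (\sum_(j | e i j) w i j * (y i - y j)) * y' i
       - (\sum_(j | e i j) w i j * (r i + r j)) * r' i.
    rewrite !mulr_suml -sumrN -!big_split /=; apply: eq_bigr => j _; ring.
  by rewrite ex ey; ring.
set S := \sum_i \sum_(j | e i j) (- (w i j * T i j)).
have S1 : S = 2 * \sum_i r' i * radial_sum e r w i.
  rewrite /S.
  have -> : \sum_i \sum_(j | e i j) (- (w i j * T i j))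
     = - (\sum_i \sum_(j | e i j) P i j) - (\sum_i \sum_(j | e i j) P j i).
    rewrite -!sumrN -big_split /=; apply: eq_bigr => i _.
    rewrite -!sumrN -big_split /=; apply: eq_bigr => j _; rewrite wT; ring.
  rewrite -(@swap_sum _ _ _ P es).
  under eq_bigr do rewrite sP.
  rewrite sumrN opprK; ring.
have term : forall i, r' i * radial_sum e r w i <= 0.
  move=> i; case K: (kind i).
  - by rewrite mulrC nmulr_rle0 ?Hp ?Rp.
  - by rewrite mulrC pmulr_rle0 ?Hm ?Rm.
  - by rewrite Re // mul0r.
  - by rewrite Hf // mulr0.
have nn : forall i j, e i j -> 0 <= - (w i j * T i j).
  move=> i j eij; rewrite oppr_ge0.
  case: (ltrgtP (w i j) 0) => wl.
  - by rewrite nmulr_rle0 // Tn.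
  - by rewrite pmulr_rle0 // Tp.
  - by rewrite wl mul0r.
have Sge : 0 <= S.
  by apply: sumr_ge0 => i _; apply: sumr_ge0 => j; apply: nn.
have Sle : S <= 0.
  rewrite S1 pmulr_rle0 //; apply: sumr_le0 => i _; exact: term.
have S0 : S = 0 by apply/eqP; rewrite eq_le Sle Sge.
have Q0 : \sum_i - (r' i * radial_sum e r w i) = 0.
  rewrite sumrN; apply/eqP; rewrite oppr_eq0; move: S0; rewrite S1 => /eqP.
  by rewrite mulf_eq0 pnatr_eq0 /=.
have inner0 : forall i, \sum_(j | e i j) (- (w i j * T i j)) = 0.
  move=> i; apply: (psumr_eq0P (P := predT) _ S0) => // k _.
  by apply: sumr_ge0 => j; apply: nn.
split.
- move=> k Hk.
  have nt : forall i, predT i -> 0 <= - (r' i * radial_sum e r w i) by move=> i _; rewrite oppr_ge0; apply: term.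
  have := psumr_eq0P nt Q0 (i := k) erefl.
  move/eqP; rewrite oppr_eq0 mulf_eq0 => /orP [/eqP //|/eqP H].
  case: Hk => Hk.
  + by have := Hp _ Hk; rewrite H ltxx.
  + by have := Hm _ Hk; rewrite H ltxx.
- move=> i j eij wn.
  have := psumr_eq0P (nn i) (inner0 i) eij.
  move/eqP; rewrite oppr_eq0 mulf_eq0 (negbTE wn) /= => /eqP.
  rewrite /T /tang_var => /eqP; rewrite subr_eq0 => /eqP //.
Qed.
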